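(* Let $q>5$ and let $\mathcal C$ be an $\mathbb F_q$-conic in a Baer subplane $\mathcal B$ of $\mathrm{PG}(2,q^2)$ tangent to $\ell_\infty$, with $\bar T=\mathcal B\cap\ell_\infty\in\mathcal C$. For a point $\bar P\in\ell_\infty$, $\bar P\ne\bar T$, the $\mathbb F_{q^2}$-conic $\mathcal C^+$ meets $\ell_\infty$ in $\bar P$ if and only if in $\mathrm{PG}(4,q^2)$ the twisted cubic $[\mathcal C]^\star$ meets the transversals $g,g^q$ of $\mathcal S$ in the points $P$ and $P^q$.
   Context: Bruck–Bose setting: $\Sigma_\infty$ a hyperplane of $\mathrm{PG}(4,q)$ with regular spread $\mathcal S$; affine points $A$ of $\mathrm{PG}(2,q^2)$ correspond to points $[A]$ of $\mathrm{PG}(4,q)\setminus\Sigma_\infty$, points $\bar T\in\ell_\infty$ to spread lines $[T]$. In $\mathrm{PG}(4,q^2)$ the transversals of $\mathcal S$ are the conjugate lines $g,g^q$ (conjugation $X\mapsto X^q$ of coordinates); for $\bar P\in\ell_\infty$, $P:=[P]^\star\cap g$, so that $[P]^\star=PP^q$ and $\bar P\mapsto P$ is a bijection $\ell_\infty\to g$. An $\mathbb F_q$-conic is a non-degenerate conic of a Baer subplane; $\mathcal C^+$ is the unique non-degenerate conic of $\mathrm{PG}(2,q^2)$ containing the $\mathbb F_q$-conic $\mathcal C$. For $\mathcal C$ through $\bar T=\mathcal B\cap\ell_\infty$, $[\mathcal C]$ is the twisted cubic of $\mathrm{PG}(4,q)$ consisting of $\{[X]:X\in\mathcal C\text{ affine}\}$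 plus one point of $[T]$, and $[\mathcal C]^\star$ its extension to $\mathrm{PG}(4,q^2)$. *)

(* Defs.v *)
From HB Require Import structures.
From mathcomp Require Import all_boot all_order all_algebra all_field.
Set Implicit Arguments. Unset Strict Implicit. Unset Printing Implicit Defensive.
Import GRing.Theory.
Local Open Scope ring_scope.

Section BruckBose.
Variable F : finFieldType.   (* F = GF(q^2) *)

(* two nonzero row vectors represent the same projective point *)
Definition pt_eq n (u v : 'rV[F]_n) : bool := (u != 0) && (u == v)%MS.

Definition Fq (q : nat) : pred F := fun x => x ^+ q == x.

(* rational normal curve of degree n: the points (1,t,..,t^n) M, t in S,
   together with the point (0,..,0,1) M (parameter t = infinity) *)
Definition mon n (t : F) : 'rV[F]_n.+1 := \row_(i < n.+1) t ^+ i.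
Definition mon_inf n : 'rV[F]_n.+1 := \row_(i < n.+1) ((i : nat) == n)%:R.
Definition rnc n m (S : pred F) (M : 'M[F]_(n.+1, m)) (v : 'rV[F]_m) : Prop :=
  (exists2 t, S t & pt_eq v (mon n t *m M)) \/ pt_eq v (mon_inf n *m M).

(* non-degenerate conics of PG(2,q^2): images of {(1:t:t^2)} u {(0:0:1)}
   under an invertible 3x3 matrix *)
Definition conic (M : 'M[F]_3) : 'rV[F]_3 -> Prop := rnc (n := 2) predT M.

(* twisted cubics of PG(4,q^2): images of {(1:t:t^2:t^3)} u {(0:0:0:1)}
   under an injective linear map F^4 -> F^5 (a 4x5 matrix of rank 4) *)
Definition twisted_cubic (K : 'M[F]_(4, 5)) : 'rV[F]_5 -> Prop :=
  rnc (n := 3) predT K.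

(* Baer subplane of PG(2,q^2): image of PG(2,q) under A in GL(3,q^2) *)
Definition baer_subplane (q : nat) (A : 'M[F]_3) (v : 'rV[F]_3) : Prop :=
  exists2 w : 'rV[F]_3, (forall i, Fq q (w ord0 i)) & pt_eq v (w *m A).

(* F_q-conic in the Baer subplane baer_subplane q A: image under A of the
   non-degenerate conic (1:t:t^2)N, t in GF(q) u {oo}, of PG(2,q), N in GL(3,q) *)
Definition fq_conic (q : nat) (N A : 'M[F]_3) : 'rV[F]_3 -> Prop :=
  rnc (n := 2) (Fq q) (N *m A).

Definition on_linf (v : 'rV[F]_3) : bool := v ord0 (inord 2) == 0.

(* Bruck--Bose image [X] of an affine point X = (x:y:1), in the coordinates
   (X, X', Y, Y', Z) of PG(4,q^2) in which PG(4,q) is the set of points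
   (x, x^q, y, y^q, z), z in GF(q), Sigma_oo is Z = 0 *)
Definition bb (q : nat) (v : 'rV[F]_3) : 'rV[F]_5 :=
  let x := v ord0 (inord 0) / v ord0 (inord 2) in
  let y := v ord0 (inord 1) / v ord0 (inord 2) in
  \row_(i < 5) [:: x; x ^+ q; y; y ^+ q; 1]`_i.

(* conjugation X -> X^q of PG(4,q^2) (fixing exactly the points of PG(4,q)) *)
Definition conj5 (q : nat) (w : 'rV[F]_5) : 'rV[F]_5 :=
  \row_(i < 5) [:: w ord0 (inord 1) ^+ q; w ord0 (inord 0) ^+ q;
                   w ord0 (inord 3) ^+ q; w ord0 (inord 2) ^+ q;
                   w ord0 (inord 4) ^+ q]`_i.

(* for P = (a:b:0) on l_oo, the point P = [P]^* cap g of the transversal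
   g : X' = Y' = Z = 0 of the spread; g^q is X = Y = Z = 0 *)
Definition gpt (v : 'rV[F]_3) : 'rV[F]_5 :=
  \row_(i < 5) [:: v ord0 (inord 0); 0; v ord0 (inord 1); 0; 0]`_i.

End BruckBose.

(* Main.v *)
Require Import Defs.
From HB Require Import structures.
From mathcomp Require Import all_boot all_order all_algebra all_field.
From mathcomp Require Import ring.
Import GRing.Theory.
Local Open Scope ring_scope.


Section Gen.
Set Implicit Arguments. Unset Strict Implicit.
Variable F : finFieldType.

Lemma pt_eqP n (u v : 'rV[F]_n) :
  reflect (u != 0 /\ exists2 c, c != 0 & v = c *: u) (pt_eq u v).
Proof.
apply: (iffP andP) => [[u0 /andP[uv vu]] | [u0 [c c0 ->]]].
  split=> //; case/sub_rVP: vu => c vE; exists c => //.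
  apply: contra u0 => /eqP c0; move/sub_rVP: uv => [a ->].
  by rewrite vE c0 scale0r scaler0.
split=> //; apply/eqmxP; exact: eqmx_sym (eqmx_scale u c0).
Qed.

Lemma pt_eq_refl n (u : 'rV[F]_n) : u != 0 -> pt_eq u u.
Proof. by move=> u0; apply/pt_eqP; split=> //; exists 1; rewrite ?oner_eq0 ?scale1r. Qed.

Lemma pt_eq_sym n (u v : 'rV[F]_n) : pt_eq u v -> pt_eq v u.
Proof.
case/pt_eqP=> u0 [c c0 vE]; apply/pt_eqP; split.
  by rewrite vE scaler_eq0 negb_or c0.
by exists c^-1; rewrite ?invr_eq0 // vE scalerA mulVf ?scale1r.
Qed.

Lemma pt_eq_trans n (u v w : 'rV[F]_n) : pt_eq u v -> pt_eq v w -> pt_eq u w.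
Proof.
case/pt_eqP=> u0 [c c0 vE] /pt_eqP[v0 [d d0 wE]]; apply/pt_eqP; split=> //.
by exists (d * c); rewrite ?mulf_neq0 // wE vE scalerA.
Qed.

Lemma pt_eq_scale n (u : 'rV[F]_n) c : u != 0 -> c != 0 -> pt_eq u (c *: u).
Proof. by move=> u0 c0; apply/pt_eqP; split=> //; exists c. Qed.

Lemma pt_eq_neq0 n (u v : 'rV[F]_n) : pt_eq u v -> v != 0.
Proof. by move/pt_eq_sym/andP=> []. Qed.

Lemma rnc_eq n m S (M : 'M[F]_(n.+1, m)) v w : rnc S M v -> pt_eq v w -> rnc S M w.
Proof.
move=> [[t St vt]|vi] vw; [left; exists t => // | right].
  exact: pt_eq_trans (pt_eq_sym vw) vt.
exact: pt_eq_trans (pt_eq_sym vw) vi.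
Qed.

Lemma rv3P (u v : 'rV[F]_3) :
  u ord0 (inord 0) = v ord0 (inord 0) -> u ord0 (inord 1) = v ord0 (inord 1) ->
  u ord0 (inord 2) = v ord0 (inord 2) -> u = v.
Proof.
move=> h0 h1 h2; apply/rowP => i; rewrite -(inord_val i).
by case: i => [[|[|[|k]]] Hk] //=.
Qed.

Lemma rv4P (u v : 'rV[F]_4) :
  u ord0 (inord 0) = v ord0 (inord 0) -> u ord0 (inord 1) = v ord0 (inord 1) ->
  u ord0 (inord 2) = v ord0 (inord 2) -> u ord0 (inord 3) = v ord0 (inord 3) -> u = v.
Proof.
move=> h0 h1 h2 h3; apply/rowP => i; rewrite -(inord_val i).
by case: i => [[|[|[|[|k]]]] Hk] //=.
Qed.

Lemma rv5P (u v : 'rV[F]_5) :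
  u ord0 (inord 0) = v ord0 (inord 0) -> u ord0 (inord 1) = v ord0 (inord 1) ->
  u ord0 (inord 2) = v ord0 (inord 2) -> u ord0 (inord 3) = v ord0 (inord 3) ->
  u ord0 (inord 4) = v ord0 (inord 4) -> u = v.
Proof.
move=> h0 h1 h2 h3 h4; apply/rowP => i; rewrite -(inord_val i).
by case: i => [[|[|[|[|[|k]]]]] Hk] //=.
Qed.

Lemma mul3E m (w : 'rV[F]_3) (M : 'M[F]_(3, m)) j :
  (w *m M) ord0 j = w ord0 (inord 0) * M (inord 0) j + w ord0 (inord 1) * M (inord 1) j
     + w ord0 (inord 2) * M (inord 2) j.
Proof.
rewrite mxE !big_ord_recl big_ord0 addr0 addrA.
by congr (w _ _ * M _ _ + w _ _ * M _ _ + w _ _ * M _ _); apply/val_inj; rewrite /= inordK.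
Qed.

Lemma mul4E m (w : 'rV[F]_4) (M : 'M[F]_(4, m)) j :
  (w *m M) ord0 j = w ord0 (inord 0) * M (inord 0) j + w ord0 (inord 1) * M (inord 1) j
     + w ord0 (inord 2) * M (inord 2) j + w ord0 (inord 3) * M (inord 3) j.
Proof.
rewrite mxE !big_ord_recl big_ord0 addr0 !addrA.
by congr (w _ _ * M _ _ + w _ _ * M _ _ + w _ _ * M _ _ + w _ _ * M _ _);
  apply/val_inj; rewrite /= inordK.
Qed.

Lemma mon2E (t : F) k : (k < 3)%N -> mon 2 t ord0 (inord k) = t ^+ k.
Proof. by move=> hk; rewrite mxE inordK. Qed.
Lemma mon3E (t : F) k : (k < 4)%N -> mon 3 t ord0 (inord k) = t ^+ k.
Proof. by move=> hk; rewrite mxE inordK. Qed.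
Lemma moninf2E k : (k < 3)%N -> mon_inf F 2 ord0 (inord k) = (k == 2)%:R :> F.
Proof. by move=> hk; rewrite mxE inordK. Qed.
Lemma moninf3E k : (k < 4)%N -> mon_inf F 3 ord0 (inord k) = (k == 3)%:R :> F.
Proof. by move=> hk; rewrite mxE inordK. Qed.

End Gen.


Section Frob.
Set Implicit Arguments. Unset Strict Implicit.
Variable F : finFieldType.
Variable q : nat.
Hypothesis Hq : #|F| = (q ^ 2)%N.

Lemma charq : ([char F]%R).-nat q.
Proof.
case: (finPcharP F) => p pp pc.
have pg := pprimeChar_pgroup pc.
have : p.-nat #|F| by move: pg; rewrite /pgroup.pgroup cardsT.
by rewrite Hq -(eq_pnat _ (pcharf_eq pc)) pnatX => /orP[].
Qed.

Lemma frD (x y : F) : (x + y) ^+ q = x ^+ q + y ^+ q.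
Proof. exact: exprDn_pchar charq. Qed.

Lemma frN (x : F) : (- x) ^+ q = - x ^+ q.
Proof. exact: exprNn_pchar charq. Qed.

Lemma frB (x y : F) : (x - y) ^+ q = x ^+ q - y ^+ q.
Proof. by rewrite frD frN. Qed.

Lemma frfr (x : F) : x ^+ q ^+ q = x.
Proof. by rewrite -exprM mulnn -Hq expf_card. Qed.

Lemma q_gt0 : (0 < q)%N.
Proof.
have : (0 < #|F|)%N by apply/card_gt0P; exists 0.
by rewrite Hq; case: q.
Qed.

End Frob.


Section Count.
Set Implicit Arguments. Unset Strict Implicit.
Variable F : finFieldType.
Variable q : nat.
Hypothesis Hq : #|F| = (q ^ 2)%N.
Hypothesis q5 : (5 < q)%N.

Lemma q_ne6 : q != 6%N.
Proof.
apply/eqP => q6; have := charq Hq; rewrite q6.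
case: (finPcharP F) => p pp pc; rewrite (eq_pnat _ (pcharf_eq pc)) => h.
have := pnat_dvd (isT : (2 %| 6)%N) h; have := pnat_dvd (isT : (3 %| 6)%N) h.
by rewrite !pnatE // !inE => /eqP <-.
Qed.

Definition Sq := [set x : F | x ^+ q == x].

Lemma card_Sq : (q <= #|Sq|)%N.
Proof.
have q0 := q_gt0 Hq.
pose f (x : F) := x ^+ q - x.
pose Im := [set f x | x in F].
have fB x y : f (x - y) = f x - f y by rewrite /f (frB Hq); ring.
have ImR y : y \in Im -> y ^+ q + y = 0.
  by case/imsetP=> x _ ->; rewrite /f (frB Hq) (frfr Hq); ring.
have cIm : (#|Im| <= q)%N.
  pose p : {poly F} := 'X^q + 'X.
  have sp : size p = q.+1.
    by rewrite size_polyDl ?size_polyXn // size_polyX ltnS (leq_trans _ q5).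
  have p0 : p != 0 by rewrite -size_poly_eq0 sp.
  have := @max_poly_roots _ p (enum Im) p0.
  rewrite sp ltnS cardE; apply.
    apply/allP => y; rewrite mem_enum => /ImR; by rewrite /root !hornerE => ->.
  exact: enum_uniq.
pose z (y : F) := odflt 0 [pick x | f x == y].
have zP x : f (z (f x)) = f x.
  rewrite /z; case: pickP => [x' /eqP //|/(_ x)]; by rewrite eqxx.
pose g (x : F) := (f x, x - z (f x)).
have ginj : injective g.
  by move=> x1 x2 [e1 e2]; move: e2; rewrite e1 => /addIr.
have : (#|F| <= #|Im| * #|Sq|)%N.
  rewrite -cardsX -(card_imset predT ginj); apply: subset_leq_card.
  apply/subsetP => _ /imsetP[x _ ->]; rewrite !inE /=; apply/andP; split.
    by apply/imsetP; exists x.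
  by rewrite -subr_eq0 -/(f _) fB zP subrr.
rewrite Hq => h; rewrite -(leq_pmul2l q0); apply: leq_trans h _.
by rewrite leq_mul2r cIm orbT.
Qed.

Lemma card_Sq7 : (7 <= #|Sq|)%N.
Proof.
apply: leq_trans card_Sq; have := q_ne6; move: q5.
by case: q => [|[|[|[|[|[|[|n]]]]]]].
Qed.

Lemma poly_Sq0 (p : {poly F}) :
  (size p <= 7)%N -> (forall x, x ^+ q = x -> p.[x] = 0) -> p = 0.
Proof.
move=> sp h; apply/eqP; apply/negPn/negP => p0.
have := @max_poly_roots _ p (enum Sq) p0.
rewrite -cardE => /(_ _ (enum_uniq _)).
have -> : all (root p) (enum Sq).
  by apply/allP => x; rewrite mem_enum inE => /eqP /h /eqP.
move=> /(_ isT) h2; have := leq_trans h2 sp.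
by rewrite ltnNge card_Sq7.
Qed.

Lemma FqD (x y : F) : Fq q x -> Fq q y -> Fq q (x + y).
Proof. by rewrite /Fq (frD Hq) => /eqP -> /eqP ->. Qed.
Lemma FqM (x y : F) : Fq q x -> Fq q y -> Fq q (x * y).
Proof. by rewrite /Fq exprMn => /eqP -> /eqP ->. Qed.
Lemma FqN (x : F) : Fq q x -> Fq q (- x).
Proof. by rewrite /Fq (frN Hq) => /eqP ->. Qed.
Lemma Fq1 : Fq q (1 : F).
Proof. by rewrite /Fq expr1n. Qed.
Lemma Fq0 : Fq q (0 : F).
Proof. by rewrite /Fq expr0n eqn0Ngt (q_gt0 Hq). Qed.
Lemma FqX (x : F) k : Fq q x -> Fq q (x ^+ k).
Proof. by rewrite /Fq -exprM mulnC exprM => /eqP ->. Qed.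

End Count.


Section Conic.
Set Implicit Arguments. Unset Strict Implicit.
Variable F : finFieldType.

Definition Q2 (w : 'rV[F]_3) :=
  w ord0 (inord 0) * w ord0 (inord 2) - w ord0 (inord 1) ^+ 2.

Lemma Q2Z a w : Q2 (a *: w) = a ^+ 2 * Q2 w.
Proof. rewrite /Q2 !mxE; ring. Qed.

Lemma Q2mon t : Q2 (mon 2 t) = 0.
Proof. rewrite /Q2 !mxE !inordK //; ring. Qed.

Lemma Q2inf : Q2 (mon_inf F 2) = 0.
Proof. rewrite /Q2 !mxE !inordK //=; ring. Qed.

Lemma mulmx_unit_neq0 n (M : 'M[F]_n) (x : 'rV_n) : M \in unitmx -> x != 0 -> x *m M != 0.
Proof. move=> Mu; apply: contra => /eqP h; by rewrite -(mulmxK Mu x) h mul0mx. Qed.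

Lemma mon_neq0 n (t : F) : mon n t != 0.
Proof. by apply/eqP => /rowP /(_ ord0); rewrite !mxE expr0 => /eqP; rewrite oner_eq0. Qed.

Lemma moninf_neq0 n : mon_inf F n != 0.
Proof. 
apply/eqP => /rowP /(_ ord_max); rewrite !mxE /= eqxx => /eqP; by rewrite oner_eq0.
Qed.

Lemma conicP (M : 'M[F]_3) v : M \in unitmx -> v != 0 ->
  conic M v <-> Q2 (v *m invmx M) = 0.
Proof.
move=> Mu v0; split.
  have key u : pt_eq v (u *m M) -> Q2 u = 0 -> Q2 (v *m invmx M) = 0.
    case/pt_eqP=> _ [c c0 uE] Qu.
    have : Q2 ((u *m M) *m invmx M) = 0 by rewrite mulmxK.
    by rewrite uE -scalemxAl Q2Z => /eqP; rewrite mulf_eq0 expf_eq0 (negPf c0) /= => /eqP.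
  case=> [[t _ h]|h]; [exact: key h (Q2mon t) | exact: key h Q2inf].
set w := v *m invmx M => Qw.
have vE : v = w *m M by rewrite /w mulmxKV.
clearbody w.
have w0 : w != 0 by apply: contra v0; rewrite vE => /eqP ->; rewrite mul0mx.
have [a0|a0] := eqVneq (w ord0 (inord 0)) 0.
  have a1 : w ord0 (inord 1) = 0.
    have : w ord0 (inord 1) ^+ 2 == 0.
      by move: Qw; rewrite /Q2 a0 mul0r sub0r => /eqP; rewrite oppr_eq0.
    by rewrite expf_eq0 => /andP[_ /eqP].
  have wE : w = w ord0 (inord 2) *: mon_inf F 2.
    by apply: rv3P; rewrite !mxE !inordK //= ?a0 ?a1; ring.
  right; apply: pt_eq_sym; rewrite vE wE -scalemxAl; apply: pt_eq_scale.
    exact: mulmx_unit_neq0 Mu (moninf_neq0 2).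
  by apply: contra w0 => /eqP h; apply/eqP; rewrite wE h scale0r.
have [t tE] : exists t, t = w ord0 (inord 1) / w ord0 (inord 0) by eexists.
left; exists t => //.
have wE : w = w ord0 (inord 0) *: mon 2 t.
  apply: rv3P; rewrite !mxE !inordK //= tE; try field => //.
  move: Qw; rewrite /Q2 => /eqP; rewrite subr_eq0 => /eqP h.
  by rewrite expr_div_n -h; field.
apply: pt_eq_sym; rewrite vE wE -scalemxAl; apply: pt_eq_scale => //.
exact: mulmx_unit_neq0 Mu (mon_neq0 2 _).
Qed.

End Conic.


Section ConicU.
Set Implicit Arguments. Unset Strict Implicit.
Variable F : finFieldType.
Variable q : nat.
Hypothesis Hq : #|F| = (q ^ 2)%N.
Hypothesis q5 : (5 < q)%N.

Definition gam (S : 'M[F]_3) : seq F :=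
  let s i j := S (inord i) (inord j) in
  [:: s 0 0 * s 0 2 - s 0 1 ^+ 2;
      s 0 0 * s 1 2 + s 1 0 * s 0 2 - 2%:R * s 0 1 * s 1 1;
      s 0 0 * s 2 2 + s 1 0 * s 1 2 + s 2 0 * s 0 2 - s 1 1 ^+ 2 - 2%:R * s 0 1 * s 2 1;
      s 1 0 * s 2 2 + s 2 0 * s 1 2 - 2%:R * s 1 1 * s 2 1;
      s 2 0 * s 2 2 - s 2 1 ^+ 2].

Lemma conic_same (M R : 'M[F]_3) : M \in unitmx -> R \in unitmx ->
  (forall t, t ^+ q = t -> conic M (mon 2 t *m R)) ->
  forall v, v != 0 -> (conic M v <-> conic R v).
Proof.
move=> Mu Ru hC.
set S := R *m invmx M.
have Su : S \in unitmx by rewrite unitmx_mul Ru unitmx_inv.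
have hS t : t ^+ q = t -> Q2 (mon 2 t *m S) = 0.
  move=> tq; rewrite /S mulmxA.
  by apply/(conicP Mu (mulmx_unit_neq0 Ru (mon_neq0 2 t))); exact: hC.
pose p : {poly F} := \poly_(i < 5) (gam S)`_i.
have pE t : p.[t] = Q2 (mon 2 t *m S).
  rewrite horner_poly !big_ord_recl big_ord0 /= /Q2 !mul3E !mxE !inordK //=; ring.
have p0 : p = 0.
  apply: (poly_Sq0 Hq q5); first exact: leq_trans (size_poly _ _) _.
  by move=> t tq; rewrite pE hS.
have g i : (gam S)`_i = 0.
  have := congr1 (fun p : {poly F} => p`_i) p0; rewrite coef_poly coef0.
  by case: ltnP => // h _; rewrite nth_default // ltnW.
move: (g 0%N) (g 1%N) (g 2%N) (g 3%N) (g 4%N) => /= g0 g1 g2 g3 g4.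
pose b := S (inord 0) (inord 0) * S (inord 2) (inord 2) + S (inord 2) (inord 0) * S (inord 0) (inord 2)
   - 2%:R * S (inord 0) (inord 1) * S (inord 2) (inord 1).
have QS w : Q2 (w *m S) = b * Q2 w.
  have e : Q2 (w *m S) = b * Q2 w + 
     ((gam S)`_0 * w ord0 (inord 0) ^+ 2 + (gam S)`_1 * w ord0 (inord 0) * w ord0 (inord 1)
      + (gam S)`_2 * w ord0 (inord 1) ^+ 2 + (gam S)`_3 * w ord0 (inord 1) * w ord0 (inord 2)
      + (gam S)`_4 * w ord0 (inord 2) ^+ 2).
    rewrite /Q2 !mul3E /b /=; ring.
  by rewrite e !g; ring.
have b0 : b != 0.
  apply/eqP => b0.
  pose e := mon 2 (0 : F) + mon_inf F 2.
  have := QS (e *m invmx S); rewrite mulmxKV // b0 mul0r /Q2 /e !mxE !inordK //=.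
  move/eqP; rewrite !expr0n /= !(addr0, add0r, mulr0, mul0r, mulr1, mul1r, subr0).
  by rewrite expr0n /= subr0 oner_eq0.
move=> v v0; rewrite (conicP Mu v0) (conicP Ru v0).
have -> : v *m invmx M = (v *m invmx R) *m S by rewrite /S mulmxA mulmxKV.
by rewrite QS; split => [/eqP|->]; rewrite ?mulr0 // mulf_eq0 (negPf b0) => /eqP.
Qed.

End ConicU.


Section Cubic.
Set Implicit Arguments. Unset Strict Implicit.
Variable F : finFieldType.

Definition QQ (w : 'rV[F]_4) a b c d :=
  w ord0 (inord a) * w ord0 (inord b) - w ord0 (inord c) * w ord0 (inord d).
Definition Q31 w := QQ w 0 2 1 1.
Definition Q32 w := QQ w 1 3 2 2.
Definition Q33 w := QQ w 0 3 1 2.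
Definition Qall w := [/\ Q31 w = 0, Q32 w = 0 & Q33 w = 0].

Lemma QQZ c w a b d e : QQ (c *: w) a b d e = c ^+ 2 * QQ w a b d e.
Proof. rewrite /QQ !mxE; ring. Qed.

Lemma QallZ c w : c != 0 -> Qall (c *: w) <-> Qall w.
Proof.
move=> c0; rewrite /Qall /Q31 /Q32 /Q33 !QQZ.
have h x : c ^+ 2 * x = 0 <-> x = 0.
  by split=> [/eqP|->]; rewrite ?mulr0 // mulf_eq0 expf_eq0 (negPf c0) => /eqP.
by split=> [[/h ? /h ? /h ?]|[-> -> ->]]; split; rewrite ?mulr0.
Qed.

Lemma Qall_mon (t : F) : Qall (mon 3 t).
Proof. by rewrite /Qall /Q31 /Q32 /Q33 /QQ !mxE !inordK //; split; ring. Qed.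

Lemma Qall_inf : Qall (mon_inf F 3).
Proof. by rewrite /Qall /Q31 /Q32 /Q33 /QQ !mxE !inordK //=; split; ring. Qed.

Lemma cut4 (w : 'rV[F]_4) : w != 0 -> Qall w ->
  (exists2 c, c != 0 & exists t, w = c *: mon 3 t) \/
  (exists2 c, c != 0 & w = c *: mon_inf F 3).
Proof.
move=> w0 [h1 h2 h3]; move: h1 h2 h3; rewrite /Q31 /Q32 /Q33 /QQ.
set a0 := w ord0 (inord 0); set a1 := w ord0 (inord 1).
set a2 := w ord0 (inord 2); set a3 := w ord0 (inord 3).
move=> /eqP; rewrite subr_eq0 => /eqP h1 /eqP; rewrite subr_eq0 => /eqP h2.
move=> /eqP; rewrite subr_eq0 => /eqP h3.
have [z0|nz0] := eqVneq a0 0.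
  have z1 : a1 = 0.
    have : a1 * a1 == 0 by rewrite -h1 z0 mul0r.
    by rewrite mulf_eq0 orbb => /eqP.
  have z2 : a2 = 0.
    have : a2 * a2 == 0 by rewrite -h2 z1 mul0r.
    by rewrite mulf_eq0 orbb => /eqP.
  right; exists a3.
    apply: contra w0 => /eqP z3; apply/eqP; apply: rv4P; rewrite !mxE //.
  by apply: rv4P; rewrite !mxE !inordK //= -/a0 -/a1 -/a2 -/a3 ?z0 ?z1 ?z2; ring.
left; exists a0 => //; exists (a1 / a0).
have e2 : a2 = a1 * a1 / a0 by rewrite -h1; field.
have e3 : a3 = a1 * a2 / a0 by rewrite -h3; field.
apply: rv4P; rewrite !mxE !inordK //= -/a0 -/a1 -/a2 -/a3; try field => //.
  by rewrite e2; field.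
by rewrite e3 e2; field.
Qed.

Lemma cubicP (K : 'M[F]_(4, 5)) v : row_free K -> v != 0 ->
  twisted_cubic K v <-> (v <= K)%MS /\ Qall (v *m pinvmx K).
Proof.
move=> Kf v0; split.
  have key y : Qall y -> pt_eq v (y *m K) -> (v <= K)%MS /\ Qall (v *m pinvmx K).
    move=> Qy /pt_eqP[_ [c c0 E]].
    have vE : v = c^-1 *: (y *m K) by rewrite E scalerA mulVf ?scale1r.
    split; first by rewrite vE scalemx_sub // submxMl.
    by rewrite vE -scalemxAl mulmxKp // QallZ // invr_eq0.
  by case=> [[t _ h]|h]; [exact: key (Qall_mon t) h | exact: key Qall_inf h].
case=> vK Qv; set w := v *m pinvmx K.
have vE : v = w *m K by rewrite /w mulmxKpV.
have w0 : w != 0 by apply: contra v0 => /eqP; rewrite vE => ->; rewrite mul0mx.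
have Qw : Qall w := Qv.
clearbody w.
have nz (y : 'rV_4) : y != 0 -> y *m K != 0 by move=> y0; rewrite mulmx_free_eq0.
case: (cut4 w0 Qw) => [[c c0 [t wE]]|[c c0 wE]]; [left; exists t => // | right];
  apply: pt_eq_sym; rewrite vE wE -scalemxAl; apply: pt_eq_scale => //; apply: nz.
  exact: mon_neq0.
exact: moninf_neq0.
Qed.

End Cubic.


Section CubicU.
Set Implicit Arguments. Unset Strict Implicit.
Variable F : finFieldType.
Variable q : nat.
Hypothesis Hq : #|F| = (q ^ 2)%N.
Hypothesis q5 : (5 < q)%N.

Lemma col_zero m (Z : 'M[F]_(4, m)) :
  (forall t, t ^+ q = t -> mon 3 t *m Z = 0) -> Z = 0.
Proof.
move=> h; apply/matrixP => i j; rewrite mxE.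
pose p : {poly F} := \poly_(k < 4) Z (inord k) j.
have p0 : p = 0.
  apply: (poly_Sq0 Hq q5); first exact: leq_trans (size_poly _ _) _.
  move=> t tq; have := congr1 (fun M : 'M_(1, m) => M ord0 j) (h t tq).
  rewrite mul4E !mxE !inordK // => e; rewrite -[RHS]e horner_poly.
  rewrite !big_ord_recl big_ord0 /=; ring.
have := congr1 (fun p : {poly F} => p`_i) p0; rewrite coef_poly coef0 ltn_ord.
by rewrite inord_val.
Qed.

Definition cA (L : 'M[F]_4) a i := L (inord i) (inord a).
Definition bd L a b c d i := cA L a i * cA L b i - cA L c i * cA L d i.
Definition bt L a b c d i j := cA L a i * cA L b j + cA L a j * cA L b i
  - cA L c i * cA L d j - cA L c j * cA L d i.
Definition gam7 L a b c d : seq F :=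
  [:: bd L a b c d 0; bt L a b c d 0 1; bt L a b c d 0 2 + bd L a b c d 1;
      bt L a b c d 0 3 + bt L a b c d 1 2; bt L a b c d 1 3 + bd L a b c d 2;
      bt L a b c d 2 3; bd L a b c d 3].

Lemma pull (L : 'M[F]_4) a b c d :
  (forall t, t ^+ q = t -> QQ (mon 3 t *m L) a b c d = 0) ->
  forall x, QQ (x *m L) a b c d = bt L a b c d 0 2 * Q31 x + bt L a b c d 1 3 * Q32 x
                                 + bt L a b c d 0 3 * Q33 x.
Proof.
move=> h.
pose p : {poly F} := \poly_(i < 7) (gam7 L a b c d)`_i.
have pE t : p.[t] = QQ (mon 3 t *m L) a b c d.
  rewrite horner_poly !big_ord_recl big_ord0 /= /QQ !mul4E !mxE !inordK //=.
  rewrite /bd /bt /cA; ring.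
have p0 : p = 0.
  apply: (poly_Sq0 Hq q5); first exact: leq_trans (size_poly _ _) _.
  by move=> t tq; rewrite pE h.
have g i : (gam7 L a b c d)`_i = 0.
  have := congr1 (fun p : {poly F} => p`_i) p0; rewrite coef_poly coef0.
  by case: ltnP => // hi _; rewrite nth_default // ltnW.
move=> x.
set G := gam7 L a b c d.
have e : QQ (x *m L) a b c d = bt L a b c d 0 2 * Q31 x + bt L a b c d 1 3 * Q32 x
                                 + bt L a b c d 0 3 * Q33 x +
  (G`_0 * x ord0 (inord 0) ^+ 2 + G`_1 * x ord0 (inord 0) * x ord0 (inord 1)
   + G`_2 * x ord0 (inord 1) ^+ 2 + G`_3 * x ord0 (inord 1) * x ord0 (inord 2)
   + G`_4 * x ord0 (inord 2) ^+ 2 + G`_5 * x ord0 (inord 2) * x ord0 (inord 3)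
   + G`_6 * x ord0 (inord 3) ^+ 2).
  rewrite /G /= /Q31 /Q32 /Q33 /QQ !mul4E /bd /bt /cA; ring.
by rewrite e !g; ring.
Qed.

Lemma QallL (L : 'M[F]_4) : L \in unitmx -> (forall t, t ^+ q = t -> Qall (mon 3 t *m L)) ->
  forall x, Qall (x *m L) <-> Qall x.
Proof.
move=> Lu hL.
have p1 := @pull L 0 2 1 1 (fun t tq => let: And3 h _ _ := hL t tq in h).
have p2 := @pull L 1 3 2 2 (fun t tq => let: And3 _ h _ := hL t tq in h).
have p3 := @pull L 0 3 1 2 (fun t tq => let: And3 _ _ h := hL t tq in h).
set l11 := bt L 0 2 1 1 0 2 in p1; set l12 := bt L 0 2 1 1 1 3 in p1;
set l13 := bt L 0 2 1 1 0 3 in p1.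
set l21 := bt L 1 3 2 2 0 2 in p2; set l22 := bt L 1 3 2 2 1 3 in p2;
set l23 := bt L 1 3 2 2 0 3 in p2.
set l31 := bt L 0 3 1 2 0 2 in p3; set l32 := bt L 0 3 1 2 1 3 in p3;
set l33 := bt L 0 3 1 2 0 3 in p3.
clearbody l11 l12 l13 l21 l22 l23 l31 l32 l33.
move=> x; split; last first.
  by case=> h1 h2 h3; split; rewrite /Q31 /Q32 /Q33 ?p1 ?p2 ?p3 h1 h2 h3; ring.
pose T : 'M[F]_3 := \matrix_(j < 3, k < 3)
  (nth [::] [:: [:: l11; l12; l13]; [:: l21; l22; l23]; [:: l31; l32; l33]] j)`_k.
have Tu : T \in unitmx.
  rewrite -row_free_unit; apply: inj_row_free => c cT.
  have ck k : (k < 3)%N -> (c *m T) ord0 (inord k) = 0 by move=> _; rewrite cT mxE.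
  move: (ck 0%N isT) (ck 1%N isT) (ck 2%N isT); rewrite !mul3E !mxE !inordK //=.
  set c1 := c ord0 (inord 0); set c2 := c ord0 (inord 1); set c3 := c ord0 (inord 2).
  move=> e1 e2 e3.
  have hy y : c1 * Q31 y + c2 * Q32 y + c3 * Q33 y = 0.
    have := p1 (y *m invmx L); have := p2 (y *m invmx L); have := p3 (y *m invmx L).
    rewrite mulmxKV // /Q31 /Q32 /Q33 => -> -> ->.
    set z1 := QQ (y *m invmx L) 0 2 1 1; set z2 := QQ (y *m invmx L) 1 3 2 2.
    set z3 := QQ (y *m invmx L) 0 3 1 2.
    have -> : c1 * (l11 * z1 + l12 * z2 + l13 * z3) + c2 * (l21 * z1 + l22 * z2 + l23 * z3) +
      c3 * (l31 * z1 + l32 * z2 + l33 * z3) =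
      (c1 * l11 + c2 * l21 + c3 * l31) * z1 + (c1 * l12 + c2 * l22 + c3 * l32) * z2 +
      (c1 * l13 + c2 * l23 + c3 * l33) * z3 by ring.
    by rewrite e1 e2 e3; ring.
  have := hy (\row_(i < 4) [:: 0; 1; 0; 0]`_i);
  have := hy (\row_(i < 4) [:: 0; 0; 1; 0]`_i);
  have := hy (\row_(i < 4) [:: 1; 0; 0; 1]`_i).
  rewrite /Q31 /Q32 /Q33 /QQ !mxE !inordK //= => h3 h2 h1.
  have lin (z E k : F) : E = 0 -> z = k * E -> z = 0 by move=> -> ->; rewrite mulr0.
  apply: rv3P; rewrite !mxE -/c1 -/c2 -/c3.
  - by apply: (lin _ _ (-1) h1); ring.
  - by apply: (lin _ _ (-1) h2); ring.
  - by apply: (lin _ _ 1 h3); ring.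
case; rewrite /Q31 /Q32 /Q33 p1 p2 p3 => h1 h2 h3.
pose r : 'rV[F]_3 := \row_(k < 3) [:: Q31 x; Q32 x; Q33 x]`_k.
have r0 : r *m T^T = 0.
  apply: rv3P; rewrite !mul3E !mxE !inordK //= -/(Q31 x) -/(Q32 x) -/(Q33 x).
  - by rewrite -h1; ring.
  - by rewrite -h2; ring.
  - by rewrite -h3; ring.
have : r == 0.
  have Ttu : T^T \in unitmx by rewrite unitmx_tr.
  by apply: contraT => rn; have := mulmx_unit_neq0 Ttu rn; rewrite r0 eqxx.
move/eqP => /rowP hr; split.
- by have := hr (inord 0); rewrite !mxE inordK.
- by have := hr (inord 1); rewrite !mxE inordK.
- by have := hr (inord 2); rewrite !mxE inordK.
Qed.

Lemma cubic_same (K0 K : 'M[F]_(4, 5)) : row_free K0 -> row_free K ->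
  (forall t, t ^+ q = t -> twisted_cubic K (mon 3 t *m K0)) ->
  forall v, v != 0 -> (twisted_cubic K v <-> twisted_cubic K0 v).
Proof.
move=> K0f Kf h.
have nz0 (y : 'rV_4) : y != 0 -> y *m K0 != 0 by rewrite mulmx_free_eq0.
have hC t : t ^+ q = t ->
    (mon 3 t *m K0 <= K)%MS /\ Qall (mon 3 t *m K0 *m pinvmx K).
  by move=> tq; apply/(cubicP Kf (nz0 _ (mon_neq0 3 t))); exact: h.
have K0K : (K0 <= K)%MS.
  rewrite submxE; apply/eqP; apply: col_zero => t tq; rewrite mulmxA; apply/eqP.
  by rewrite -submxE; exact: (hC t tq).1.
set L := K0 *m pinvmx K.
have LK : L *m K = K0 by rewrite /L mulmxKpV.
have hL t : t ^+ q = t -> Qall (mon 3 t *m L).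
  by move=> tq; rewrite /L mulmxA; exact: (hC t tq).2.
have Lu : L \in unitmx.
  by rewrite -row_free_unit -row_leq_rank -(mxrankMfree _ Kf) LK row_leq_rank.
have key := QallL Lu hL.
clearbody L.
move=> v v0; split.
  case/(cubicP Kf v0) => vK Qv.
  set y := v *m pinvmx K in Qv.
  have vE : v = y *m K by rewrite /y mulmxKpV.
  clearbody y.
  set x := y *m invmx L.
  have yE : y = x *m L by rewrite /x mulmxKV.
  clearbody x.
  have vE' : v = x *m K0 by rewrite vE yE -mulmxA LK.
  apply/(cubicP K0f v0); split; first by rewrite vE' submxMl.
  by rewrite vE' mulmxKp // -key -yE.
case/(cubicP K0f v0) => vK Qv.
set x := v *m pinvmx K0 in Qv.
have vE : v = x *m K0 by rewrite /x mulmxKpV.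
clearbody x.
apply/(cubicP Kf v0); split; first exact: submx_trans vK K0K.
by rewrite vE -LK mulmxA mulmxKp // key.
Qed.

End CubicU.


Section Main.
Set Implicit Arguments. Unset Strict Implicit.
Variable F : finFieldType.
Variable q : nat.
Hypothesis Hq : #|F| = (q ^ 2)%N.
Hypothesis q5 : (5 < q)%N.
Variable R : 'M[F]_3.
Hypothesis Ru : R \in unitmx.
Local Notation r i j := (R (inord i) (inord j)).
Local Notation "x '" := (x ^+ q) (at level 2, format "x '").
Hypothesis H22 : r 2 2 = 0.
Hypothesis Hb : r 1 2 != 0.
Hypothesis Hg : forall t, t ^+ q = t -> r 0 2 + r 1 2 * t != 0.

Definition qm (x0 x1 x2 l0 l1 : F) : seq F :=
  [:: x0 * l0; x0 * l1 + x1 * l0; x1 * l1 + x2 * l0; x2 * l1].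

Definition K0 : 'M[F]_(4, 5) := \matrix_(k < 4, j < 5)
  (nth [::] [:: qm (r 0 0) (r 1 0) (r 2 0) ((r 0 2)') ((r 1 2)');
                qm ((r 0 0)') ((r 1 0)') ((r 2 0)') (r 0 2) (r 1 2);
                qm (r 0 1) (r 1 1) (r 2 1) ((r 0 2)') ((r 1 2)');
                qm ((r 0 1)') ((r 1 1)') ((r 2 1)') (r 0 2) (r 1 2);
                qm (r 0 2) (r 1 2) 0 ((r 0 2)') ((r 1 2)')] j)`_k.

Definition Xc j (t : F) := r 0 j + r 1 j * t + r 2 j * t ^+ 2.
Definition Xb j (t : F) := (r 0 j)' + (r 1 j)' * t + (r 2 j)' * t ^+ 2.
Definition gl (t : F) := r 0 2 + r 1 2 * t.
Definition gb (t : F) := (r 0 2)' + (r 1 2)' * t.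

Lemma K0monE t j : (j < 5)%N -> (mon 3 t *m K0) ord0 (inord j) =
  [:: Xc 0 t * gb t; Xb 0 t * gl t; Xc 1 t * gb t; Xb 1 t * gl t; gl t * gb t]`_j.
Proof.
move=> hj; rewrite mul4E !mxE !inordK //; rewrite /Xc /Xb /gl /gb.
by case: j hj => [|[|[|[|[|j]]]]] // _ /=; ring.
Qed.

Lemma K0infE j : (j < 5)%N -> (mon_inf F 3 *m K0) ord0 (inord j) =
  [:: r 2 0 * (r 1 2)'; (r 2 0)' * r 1 2; r 2 1 * (r 1 2)'; (r 2 1)' * r 1 2; 0]`_j.
Proof.
move=> hj; rewrite mul4E !mxE !inordK //=.
by case: j hj => [|[|[|[|[|j]]]]] // _ /=; ring.
Qed.

Lemma monRE t j : (j < 3)%N -> (mon 2 t *m R) ord0 (inord j) = Xc j t.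
Proof. by move=> hj; rewrite mul3E !mxE !inordK // /Xc; ring. Qed.

Lemma monR0 t : (mon 2 t *m R) ord0 (inord 0) = Xc 0 t. Proof. exact: monRE. Qed.
Lemma monR1 t : (mon 2 t *m R) ord0 (inord 1) = Xc 1 t. Proof. exact: monRE. Qed.
Lemma monR2 t : (mon 2 t *m R) ord0 (inord 2) = Xc 2 t. Proof. exact: monRE. Qed.

Lemma XcE t : Xc 2 t = gl t.
Proof. by rewrite /Xc H22 /gl; ring. Qed.

Lemma frX (x0 x1 x2 t : F) : (x0 + x1 * t + x2 * t ^+ 2) ^+ q =
  x0 ^+ q + x1 ^+ q * t ^+ q + x2 ^+ q * (t ^+ q) ^+ 2.
Proof. by rewrite !(frD Hq) !exprMn expr2. Qed.

Lemma XbE j t : t ^+ q = t -> Xb j t = (Xc j t) ^+ q.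
Proof. by move=> tq; rewrite /Xb /Xc frX tq. Qed.

Lemma bbE (v : 'rV[F]_3) k : (k < 5)%N -> bb q v ord0 (inord k) =
  [:: v ord0 (inord 0) / v ord0 (inord 2); (v ord0 (inord 0) / v ord0 (inord 2)) ^+ q;
      v ord0 (inord 1) / v ord0 (inord 2); (v ord0 (inord 1) / v ord0 (inord 2)) ^+ q; 1]`_k.
Proof. by move=> hk; rewrite /bb mxE inordK. Qed.

Lemma gbE t : t ^+ q = t -> gb t = (gl t) ^+ q.
Proof. by move=> tq; rewrite /gb /gl (frD Hq) exprMn tq. Qed.

Lemma bb_mon t : t ^+ q = t -> pt_eq (bb q (mon 2 t *m R)) (mon 3 t *m K0).
Proof.
move=> tq; have g0 := Hg tq.
have gb0 : gb t != 0 by rewrite (gbE tq) expf_neq0.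
apply/pt_eqP; split.
  apply/eqP => /rowP /(_ (inord 4)); rewrite /bb !mxE inordK //= => /eqP.
  by rewrite oner_eq0.
exists (gl t * gb t); first by rewrite mulf_neq0.
apply: rv5P; rewrite K0monE // mxE bbE //= ?monR0 ?monR1 ?monR2 ?XcE;
  rewrite ?expr_div_n -?XbE // -?(gbE tq); field; rewrite ?g0 ?gb0 //.
Qed.

Lemma gptE (P : 'rV[F]_3) k : (k < 5)%N -> gpt P ord0 (inord k) =
  [:: P ord0 (inord 0); 0; P ord0 (inord 1); 0; 0]`_k.
Proof. by move=> hk; rewrite /gpt mxE inordK. Qed.

Lemma conj5E (w : 'rV[F]_5) k : (k < 5)%N -> conj5 q w ord0 (inord k) =
  [:: w ord0 (inord 1) ^+ q; w ord0 (inord 0) ^+ q; w ord0 (inord 3) ^+ q;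
      w ord0 (inord 2) ^+ q; w ord0 (inord 4) ^+ q]`_k.
Proof. by move=> hk; rewrite /conj5 mxE inordK. Qed.

Lemma linf_neq0 (P : 'rV[F]_3) : P != 0 -> on_linf P ->
  P ord0 (inord 0) != 0 \/ P ord0 (inord 1) != 0.
Proof.
move=> P0 /eqP P2.
case: (eqVneq (P ord0 (inord 0)) 0) => h0; last by left.
case: (eqVneq (P ord0 (inord 1)) 0) => h1; last by right.
have PE : P = 0 by apply: rv3P; rewrite ?h0 ?h1 ?P2 !mxE.
by rewrite PE eqxx in P0.
Qed.

Lemma gpt_neq0 (P : 'rV[F]_3) : P != 0 -> on_linf P -> gpt P != 0.
Proof.
move=> P0 HP; case: (linf_neq0 P0 HP) => h; apply: contra h => /eqP g0.
  by have := gptE P (isT : (0 < 5)%N); rewrite g0 mxE /= => <-.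
by have := gptE P (isT : (2 < 5)%N); rewrite g0 mxE /= => <-.
Qed.

Lemma conj_neq0 (P : 'rV[F]_3) : P != 0 -> on_linf P -> conj5 q (gpt P) != 0.
Proof.
move=> P0 HP; case: (linf_neq0 P0 HP) => h; apply: contra h => /eqP g0.
  have := conj5E (gpt P) (isT : (1 < 5)%N); rewrite g0 mxE (@gptE P 0%N) //= => /esym /eqP.
  by rewrite expf_eq0 => /andP[_ ->].
have := conj5E (gpt P) (isT : (3 < 5)%N); rewrite g0 mxE (@gptE P 2%N) //= => /esym /eqP.
by rewrite expf_eq0 => /andP[_ ->].
Qed.

Definition s0 := - r 0 2 / r 1 2.

Lemma gl_s : gl s0 = 0.
Proof. by rewrite /gl /s0; field. Qed.

Lemma s_neq : s0 ^+ q != s0.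
Proof. by apply/negP => /eqP /Hg; rewrite -/(gl s0) gl_s eqxx. Qed.

Lemma sqE : s0 ^+ q = - (r 0 2)' / (r 1 2)'.
Proof. by rewrite /s0 expr_div_n (frN Hq). Qed.

Lemma b'0 : (r 1 2)' != 0.
Proof. by rewrite expf_neq0. Qed.

Lemma gb_sq : gb (s0 ^+ q) = 0.
Proof. by rewrite /gb sqE; field; exact: b'0. Qed.

Lemma gl_sq : gl (s0 ^+ q) != 0.
Proof.
have -> : gl (s0 ^+ q) = r 1 2 * (s0 ^+ q - s0) by rewrite /gl /s0; field.
by rewrite mulf_neq0 // subr_eq0 s_neq.
Qed.

Lemma gb_s : gb s0 != 0.
Proof.
have -> : gb s0 = (r 1 2)' * (s0 - s0 ^+ q) by rewrite sqE /gb; field; exact: b'0.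
by rewrite mulf_neq0 ?b'0 // subr_eq0 eq_sym s_neq.
Qed.

Lemma Xb_sq j : Xb j (s0 ^+ q) = (Xc j s0) ^+ q.
Proof. by rewrite /Xb /Xc frX. Qed.

Lemma Xs_nz : Xc 0 s0 != 0 \/ Xc 1 s0 != 0.
Proof.
have := mulmx_unit_neq0 Ru (mon_neq0 2 s0).
case: (eqVneq (Xc 0 s0) 0) => h0; last by left.
case: (eqVneq (Xc 1 s0) 0) => h1; last by right.
suff -> : mon 2 s0 *m R = 0 by rewrite eqxx.
by apply: rv3P; rewrite ?monR0 ?monR1 ?monR2 ?XcE ?gl_s !mxE.
Qed.

Lemma K0_free : row_free K0.
Proof.
apply: inj_row_free => w wK.
have E j : (j < 5)%N -> (w *m K0) ord0 (inord j) = 0 by rewrite wK mxE.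
move: (E 0%N isT) (E 1%N isT) (E 2%N isT) (E 3%N isT) (E 4%N isT).
rewrite !mul4E !mxE !inordK //=.
set w0 := w ord0 (inord 0); set w1 := w ord0 (inord 1).
set w2 := w ord0 (inord 2); set w3 := w ord0 (inord 3).
move=> e0 e1 e2 e3 e4.
pose U : 'rV[F]_3 := \row_(i < 3) [:: w0 * (r 0 2 ^+ q) + w1 * (r 1 2 ^+ q); w1 * (r 0 2 ^+ q) + w2 * (r 1 2 ^+ q); w2 * (r 0 2 ^+ q) + w3 * (r 1 2 ^+ q)]`_i.
have UR : U *m R = 0.
  apply: rv3P; rewrite !mul3E !mxE !inordK //=.
  - by rewrite -e0; ring.
  - by rewrite -e2; ring.
  - by rewrite -e4 H22; ring.
have U0 : U = 0.
  by apply/eqP; apply: contraT => Un; have := mulmx_unit_neq0 Ru Un; rewrite UR eqxx.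
have u k : (k < 3)%N -> U ord0 (inord k) = 0 by rewrite U0 mxE.
move: (u 0%N isT) (u 1%N isT) (u 2%N isT); rewrite !mxE !inordK //= => u0 u1 u2.
have bq := b'0.
have sq := sqE.
have via (x y e k : F) : e = 0 -> x - y = k * e -> x = y.
  by move=> -> h; apply/eqP; rewrite -subr_eq0 h mulr0.
have w1E : w1 = s0 ^+ q * w0.
  by rewrite sq; apply: (via _ _ _ (r 1 2 ^+ q)^-1 u0); field.
have w2E : w2 = s0 ^+ q * w1.
  by rewrite sq; apply: (via _ _ _ (r 1 2 ^+ q)^-1 u1); field.
have w3E : w3 = s0 ^+ q * w2.
  by rewrite sq; apply: (via _ _ _ (r 1 2 ^+ q)^-1 u2); field.
have zv (x e k : F) : e = 0 -> x = k * e -> x = 0 by move=> -> ->; rewrite mulr0.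
have f0 : w0 * gl (s0 ^+ q) * Xb 0 (s0 ^+ q) = 0.
  by apply: (zv _ _ 1 e1); rewrite w3E w2E w1E /gl /Xb; ring.
have f1 : w0 * gl (s0 ^+ q) * Xb 1 (s0 ^+ q) = 0.
  by apply: (zv _ _ 1 e3); rewrite w3E w2E w1E /gl /Xb; ring.
have wz : w0 = 0.
  rewrite !Xb_sq in f0 f1.
  case: Xs_nz => h.
    by move: f0 => /eqP; rewrite !mulf_eq0 (negPf gl_sq) expf_eq0 (negPf h) andbF !orbF => /eqP.
  by move: f1 => /eqP; rewrite !mulf_eq0 (negPf gl_sq) expf_eq0 (negPf h) andbF !orbF => /eqP.
apply: rv4P; rewrite !mxE -/w0 -/w1 -/w2 -/w3.
- exact: wz.
- by rewrite w1E wz mulr0.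
- by rewrite w2E w1E wz !mulr0.
by rewrite w3E w2E w1E wz !mulr0.
Qed.

Lemma u_s u : gl u = 0 -> u = s0.
Proof. by move/eqP; rewrite /gl addr_eq0 => /eqP h; rewrite /s0 h opprK [r 1 2 * u]mulrC mulfK. Qed.

Lemma Cp_mon t : t ^+ q = t -> rnc (Fq q) R (mon 2 t *m R).
Proof.
move=> tq; left; exists t; first by apply/eqP.
exact/pt_eq_refl/(mulmx_unit_neq0 Ru (mon_neq0 2 t)).
Qed.

Lemma conic_part (M : 'M[F]_3) : M \in unitmx ->
  (forall v, rnc (Fq q) R v -> conic M v) ->
  forall P : 'rV[F]_3, P != 0 -> on_linf P -> ~~ pt_eq P (mon_inf F 2 *m R) ->
  (conic M P <-> pt_eq (mon 2 s0 *m R) P).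
Proof.
move=> Mu hM P P0 HP HT.
have hC t : t ^+ q = t -> conic M (mon 2 t *m R) by move=> tq; apply: hM; exact: Cp_mon.
rewrite (conic_same Hq q5 Mu Ru hC P0); split; last first.
  by move=> h; left; exists s0 => //; exact: pt_eq_sym.
case=> [[u _ h]|h]; last by move: HT; rewrite h.
case/pt_eqP: (h) => _ [c c0 E].
have := congr1 (fun v : 'rV_3 => v ord0 (inord 2)) E; rewrite /= monR2 XcE mxE (eqP HP) mulr0.
by move/u_s => us; rewrite -us; exact: pt_eq_sym.
Qed.

Lemma z0q : (0 : F) ^+ q = 0.
Proof. by rewrite expr0n eqn0Ngt (q_gt0 Hq). Qed.

Lemma cubic_part (K : 'M[F]_(4, 5)) : row_free K ->
  (forall X, rnc (Fq q) R X -> ~~ on_linf X -> twisted_cubic K (bb q X)) ->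
  forall P : 'rV[F]_3, P != 0 -> on_linf P ->
  (twisted_cubic K (gpt P) /\ twisted_cubic K (conj5 q (gpt P)) <->
   pt_eq (mon 2 s0 *m R) P).
Proof.
move=> Kf hX P P0 HP.
have hK t : t ^+ q = t -> twisted_cubic K (mon 3 t *m K0).
  move=> tq; apply: rnc_eq (bb_mon tq); apply: hX; first exact: Cp_mon.
  by rewrite /on_linf monR2 XcE; exact: Hg tq.
have same := cubic_same Hq q5 K0_free Kf hK.
rewrite (same _ (gpt_neq0 P0 HP)) (same _ (conj_neq0 P0 HP)).
have gs := gl_s; have gbs := gb_s.
have HP2 : P ord0 (inord 2) = 0 by apply/eqP.
split.
  case=> [] [[u _ h]|h] _.
    case/pt_eqP: h => _ [c c0 E].
    have e k : (k < 5)%N -> (mon 3 u *m K0) ord0 (inord k) = c * gpt P ord0 (inord k).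
      by move=> hk; rewrite E mxE.
    move: (e 0%N isT) (e 2%N isT) (e 4%N isT).
    rewrite (@K0monE u 0%N) // (@K0monE u 2%N) // (@K0monE u 4%N) //.
    rewrite (@gptE P 0%N) // (@gptE P 2%N) // (@gptE P 4%N) //= mulr0 => e0 e2 e4.
    have [gu|gu] := eqVneq (gl u) 0.
      have us := u_s gu; rewrite us in e0 e2.
      apply/pt_eqP; split; first exact: (mulmx_unit_neq0 Ru (mon_neq0 2 s0)).
      exists (gb s0 / c); first by rewrite mulf_neq0 ?invr_eq0.
      apply: rv3P; rewrite mxE ?monR0 ?monR1 ?monR2 ?XcE ?gs ?HP2 ?mulr0 //.
        by rewrite -(mulKf c0 (P ord0 (inord 0))) -e0; field.
      by rewrite -(mulKf c0 (P ord0 (inord 1))) -e2; field.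
    have gbu : gb u = 0.
      by move/eqP: e4; rewrite mulf_eq0 (negPf gu) => /eqP.
    move: e0 e2; rewrite gbu !mulr0 => /esym/eqP e0 /esym/eqP e2.
    move: e0 e2; rewrite !mulf_eq0 (negPf c0) /= => e0 e2.
    by case: (linf_neq0 P0 HP); rewrite ?e0 ?e2.
  case/pt_eqP: h => _ [c c0 E].
  have e k : (k < 5)%N -> (mon_inf F 3 *m K0) ord0 (inord k) = c * gpt P ord0 (inord k).
    by move=> hk; rewrite E mxE.
  move: (e 1%N isT) (e 3%N isT).
  rewrite (@K0infE 1%N) // (@K0infE 3%N) // (@gptE P 1%N) // (@gptE P 3%N) //= mulr0.
  move=> /eqP e1 /eqP e3; move: e1 e3; rewrite !mulf_eq0 (negPf Hb) !orbF !expf_eq0.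
  move=> /andP[_ /eqP r20] /andP[_ /eqP r21].
  have := mulmx_unit_neq0 Ru (moninf_neq0 F 2).
  suff -> : mon_inf F 2 *m R = 0 by rewrite eqxx.
  by apply: rv3P; rewrite !mul3E !mxE !inordK //= ?r20 ?r21 ?H22; ring.
move=> h; case/pt_eqP: (h) => _ [c c0 E].
have P0E : P ord0 (inord 0) = c * Xc 0 s0 by rewrite E mxE monR0.
have P1E : P ord0 (inord 1) = c * Xc 1 s0 by rewrite E mxE monR1.
split.
  left; exists s0 => //; apply/pt_eqP; split; first exact: gpt_neq0.
  exists (gb s0 / c); first by rewrite mulf_neq0 ?invr_eq0.
  apply: rv5P; rewrite K0monE // mxE gptE //= ?P0E ?P1E ?gs; field; exact: c0.
left; exists (s0 ^+ q) => //; apply/pt_eqP; split; first exact: conj_neq0.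
have cq : c ^+ q != 0 by rewrite expf_neq0.
exists (gl (s0 ^+ q) / c ^+ q); first by rewrite mulf_neq0 ?invr_eq0 ?gl_sq.
apply: rv5P; rewrite K0monE // mxE conj5E // ?(@gptE P 0%N) // ?(@gptE P 1%N) //
  ?(@gptE P 2%N) // ?(@gptE P 3%N) // ?(@gptE P 4%N) //= ?z0q ?gb_sq ?P0E ?P1E
  ?[(c * _) ^+ q]exprMn -?Xb_sq; field; exact: cq.
Qed.

End Main.

Lemma bbZ (F : finFieldType) q (c : F) X : c != 0 -> bb q (c *: X) = bb q X.
Proof.
move=> c0; rewrite /bb !mxE.
have e k : (c * X ord0 (inord k)) / (c * X ord0 (inord 2)) = X ord0 (inord k) / X ord0 (inord 2).
  by rewrite invfM mulrACA divff // mul1r.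
by rewrite !e.
Qed.


Section Reparam.
Set Implicit Arguments. Unset Strict Implicit.
Variable F : finFieldType.
Variable q : nat.
Hypothesis Hq : #|F| = (q ^ 2)%N.
Hypothesis q5 : (5 < q)%N.

Lemma FqV (x : F) : Fq q x -> Fq q x^-1.
Proof. by rewrite /Fq exprVn => /eqP ->. Qed.

Lemma pt_eq_scale_r n (v u : 'rV[F]_n) c : c != 0 -> pt_eq v (c *: u) -> pt_eq v u.
Proof.
move=> c0 h; apply: (pt_eq_trans h).
have u0 : u != 0 by apply: contra (pt_eq_neq0 h) => /eqP ->; rewrite scaler0.
exact/pt_eq_sym/pt_eq_scale.
Qed.

Lemma pt_eq_scale_l n (v u : 'rV[F]_n) c : c != 0 -> pt_eq v u -> pt_eq v (c *: u).
Proof.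
move=> c0 h; apply: (pt_eq_trans h). apply: pt_eq_scale => //; exact: pt_eq_neq0 h.
Qed.

Definition Pm (t0 : F) : 'M[F]_3 := \matrix_(i < 3, j < 3)
  (nth [::] [:: [:: 0; 0; 1]; [:: 0; 1; 2%:R * t0]; [:: 1; t0; t0 ^+ 2]] i)`_j.

Lemma Pm_mon t0 u : u != 0 -> mon 2 u *m Pm t0 = u ^+ 2 *: mon 2 (t0 + u^-1).
Proof. by move=> u0; apply: rv3P; rewrite !mul3E !mxE !inordK //=; field. Qed.

Lemma Pm_mon0 t0 : mon 2 0 *m Pm t0 = mon_inf F 2.
Proof. by apply: rv3P; rewrite !mul3E !mxE !inordK //=; ring. Qed.

Lemma Pm_inf t0 : mon_inf F 2 *m Pm t0 = mon 2 t0.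
Proof. by apply: rv3P; rewrite !mul3E !mxE !inordK //=; ring. Qed.

Lemma Pm_unit t0 : Pm t0 \in unitmx.
Proof.
rewrite -row_free_unit; apply: inj_row_free => w wP.
have e k : (k < 3)%N -> (w *m Pm t0) ord0 (inord k) = 0 by rewrite wP mxE.
move: (e 0%N isT) (e 1%N isT) (e 2%N isT); rewrite !mul3E !mxE !inordK //=.
rewrite !(mulr0, mul0r, mulr1, add0r, addr0) => e0 e1 e2.
have w1 : w ord0 (inord 1) = 0 by rewrite -e1 e0; ring.
have w0 : w ord0 (inord 0) = 0 by rewrite -e2 w1 e0; ring.
by apply: rv3P; rewrite !mxE.
Qed.

Lemma Pm_Fq t0 : Fq q t0 -> forall i j, Fq q (Pm t0 i j).
Proof.
move=> ht i j; rewrite mxE.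
have F0 := Fq0 Hq; have F1 := Fq1 F.
case: i => [[|[|[|i]]] hi] //=; case: j => [[|[|[|j]]] hj] //=.
- by apply: FqM => //; apply: FqD.
- exact: FqX.
Qed.

Lemma reparam t0 (R0 : 'M[F]_3) : Fq q t0 -> R0 \in unitmx ->
  forall v, rnc (Fq q) (Pm t0 *m R0) v <-> rnc (Fq q) R0 v.
Proof.
move=> ht Ru v; split.
  case=> [[u hu h]|h].
    rewrite mulmxA in h.
    have [u0|u0] := eqVneq u 0.
      by right; move: h; rewrite u0 Pm_mon0.
    left; exists (t0 + u^-1); first by apply: FqD => //; apply: FqV.
    by move: h; rewrite Pm_mon // -scalemxAl; apply: pt_eq_scale_r; rewrite expf_neq0.
  by left; exists t0 => //; move: h; rewrite mulmxA Pm_inf.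
case=> [[t ht' h]|h].
  have [tt|tt] := eqVneq t t0.
    by right; rewrite mulmxA Pm_inf -tt.
  have d0 : t - t0 != 0 by rewrite subr_eq0.
  left; exists (t - t0)^-1.
    by apply: FqV; apply: FqD => //; apply: FqN.
  rewrite mulmxA Pm_mon ?invr_eq0 //.
  have -> : t0 + (t - t0)^-1^-1 = t by rewrite invrK; ring.
  rewrite -scalemxAl.
  by apply: pt_eq_scale_l => //; rewrite expf_neq0 ?invr_eq0.
by left; exists 0; [exact: Fq0 | rewrite mulmxA Pm_mon0].
Qed.

End Reparam.


Lemma FqMx (F : finFieldType) q (Hq : #|F| = (q ^ 2)%N) m n p
  (A : 'M[F]_(m, n)) (B : 'M[F]_(n, p)) :
  (forall i j, Fq q (A i j)) -> (forall i j, Fq q (B i j)) -> forall i j, Fq q ((A *m B) i j).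
Proof.
move=> hA hB i j; rewrite mxE; apply: (big_ind (Fq q)).
- exact: Fq0.
- exact: FqD.
- by move=> k _; apply: FqM.
Qed.

Theorem corollary5p7 (F : finFieldType) (q : nat) (A N : 'M[F]_3)
    (T : 'rV[F]_3) :
  #|F| = (q ^ 2)%N -> (5 < q)%N ->
  A \in unitmx -> N \in unitmx -> (forall i j, Fq q (N i j)) ->
  (* B = baer_subplane q A is tangent to l_oo, with B cap l_oo = {T} *)
  baer_subplane q A T -> on_linf T ->
  (forall v, baer_subplane q A v -> on_linf v -> pt_eq v T) ->
  (* T lies on the F_q-conic C = fq_conic q N A *)
  fq_conic q N A T ->
  (* the conic C^+ and the twisted cubic [C]^* exist ... *)
  ((exists M : 'M[F]_3, M \in unitmx /\
      (forall v, fq_conic q N A v -> conic M v)) /\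
   (exists K : 'M[F]_(4, 5), row_free K /\
      (forall X, fq_conic q N A X -> ~~ on_linf X -> twisted_cubic K (bb q X))))
  /\
  (* ... and for every such C^+ and [C]^*, and every P on l_oo, P <> T : *)
  (forall (M : 'M[F]_3) (K : 'M[F]_(4, 5)),
     M \in unitmx -> (forall v, fq_conic q N A v -> conic M v) ->
     row_free K ->
     (forall X, fq_conic q N A X -> ~~ on_linf X -> twisted_cubic K (bb q X)) ->
     forall P : 'rV[F]_3, P != 0 -> on_linf P -> ~~ pt_eq P T ->
       (conic M P <->
        twisted_cubic K (gpt P) /\ twisted_cubic K (conj5 q (gpt P)))).
Proof.
move=> Hq q5 Au Nu NF BT LT HB CT.
have NAu : N *m A \in unitmx by rewrite unitmx_mul Nu Au.
have [N' [N'u N'F N'eq TN']] : exists N' : 'M[F]_3, [/\ N' \in unitmx,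
    (forall i j, Fq q (N' i j)),
    (forall v, rnc (Fq q) (N' *m A) v <-> fq_conic q N A v) &
    pt_eq T (mon_inf F 2 *m (N' *m A))].
  case: CT => [[t0 ht h]|h].
    exists (Pm t0 *m N); split.
    - by rewrite unitmx_mul Pm_unit Nu.
    - by apply: FqMx => //; apply: Pm_Fq.
    - by move=> v; rewrite -mulmxA; apply: reparam.
    - by rewrite !mulmxA Pm_inf; rewrite mulmxA in h.
  by exists N; split.
set R := N' *m A.
have Ru : R \in unitmx by rewrite unitmx_mul N'u Au.
have RE : R = N' *m A by [].
clearbody R.
rewrite -RE in TN' N'eq.
have H22 : R (inord 2) (inord 2) = 0.
  case/pt_eqP: (TN') => _ [c c0 E].
  have := congr1 (fun v : 'rV_3 => v ord0 (inord 2)) E.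
  rewrite /= mul3E !mxE !inordK //= (eqP LT) mulr0.
  by rewrite !(mul0r, add0r, mul1r) => ->.
have inB (w : 'rV[F]_3) : (forall j, Fq q ((w *m N') ord0 j)) -> w != 0 ->
    on_linf (w *m R) -> exists2 c, c != 0 & w = c *: mon_inf F 2.
  move=> wF w0 wL.
  have wR0 : w *m R != 0 by apply: mulmx_unit_neq0.
  have : pt_eq (w *m R) T.
    apply: HB wL; exists (w *m N') => //.
    by rewrite RE mulmxA; apply: pt_eq_refl; rewrite -mulmxA -RE.
  move=> /pt_eq_trans /(_ TN') /pt_eqP [_ [c c0 E]].
  exists c^-1; first by rewrite invr_eq0.
  apply: (row_free_inj (A := R)); first by rewrite row_free_unit.
  by rewrite /= -scalemxAl E scalerA mulVf ?scale1r.
have Hb : R (inord 1) (inord 2) != 0.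
  apply/negP => /eqP b0.
  pose e1 : 'rV[F]_3 := \row_(i < 3) [:: 0; 1; 0]`_i.
  have e1F j : Fq q ((e1 *m N') ord0 j).
    by rewrite mul3E !mxE !inordK //= !(mul0r, add0r, addr0, mul1r).
  have e10 : e1 != 0.
    by apply/eqP => /rowP /(_ (inord 1)); rewrite !mxE inordK //= => /eqP; rewrite oner_eq0.
  have : on_linf (e1 *m R).
    by rewrite /on_linf mul3E !mxE !inordK //= b0 !(mul0r, add0r, addr0, mul1r).
  case/(inB _ e1F e10) => c c0 /rowP /(_ (inord 1)); rewrite !mxE !inordK //= mulr0.
  by move/eqP; rewrite oner_eq0.
have Hg t : t ^+ q = t -> R (inord 0) (inord 2) + R (inord 1) (inord 2) * t != 0.
  move=> tq; apply/negP => /eqP g0.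
  have mF j : Fq q ((mon 2 t *m N') ord0 j).
    have tF : Fq q t by apply/eqP.
    rewrite mul3E !mxE !inordK //.
    by apply: (FqD Hq); [apply: (FqD Hq)|]; apply: FqM => //; apply: FqX.
  have : on_linf (mon 2 t *m R).
    by rewrite /on_linf mul3E !mxE !inordK // H22 expr0 mul1r expr1 mulr0 addr0 [t * _]mulrC g0.
  case/(inB _ mF (mon_neq0 2 t)) => c c0 /rowP /(_ (inord 0)); rewrite !mxE !inordK //= mulr0.
  by move/eqP; rewrite oner_eq0.
have HT2 : forall X, pt_eq X (mon_inf F 2 *m R) -> on_linf X.
  move=> X /pt_eqP [X0 [c c0 E]].
  have := congr1 (fun v : 'rV_3 => v ord0 (inord 2)) E.
  rewrite /= mul3E !mxE !inordK //= H22 !(mul0r, add0r, mul1r, mulr0) => /esym/eqP.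
  by rewrite mulf_eq0 (negPf c0).
split; [split|].
- exists (N *m A); split => // v [[t _ h]|h]; [by left; exists t | by right].
- exists (K0 q R); split; first by apply: K0_free.
  move=> X /N'eq [[t ht h]|h] nX; last by rewrite (HT2 _ h) in nX.
  have tq : t ^+ q = t by apply/eqP.
  case/pt_eqP: h => X0 [c c0 E].
  have -> : bb q X = bb q (mon 2 t *m R) by rewrite E bbZ.
  by left; exists t => //; apply: bb_mon.
move=> M K Mu hM Kf hK P P0 HP HT.
have hM' v : rnc (Fq q) R v -> conic M v by move/N'eq; exact: hM.
have hK' X : rnc (Fq q) R X -> ~~ on_linf X -> twisted_cubic K (bb q X).
  by move/N'eq; exact: hK.
have HT' : ~~ pt_eq P (mon_inf F 2 *m R).
  by apply: contra HT => h; exact: pt_eq_trans h (pt_eq_sym TN').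
rewrite (conic_part Hq q5 Ru H22 Hb Mu hM' P0 HP HT').
by rewrite (cubic_part Hq q5 Ru H22 Hb Hg Kf hK' P0 HP).
Qed.
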